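(* Let $A$ be an $n\times n$ nonnegative irreducible matrix with Perron eigenvalue $\lambda_p$ and Perron eigenvector $v_p$ (all of whose entries are positive). Let $S=\mathrm{diag}(v_p)$ and $B=S^{-1}AS$. Then every eigenvalue of $A$ other than $\lambda_p$ lies in the Gershgorin region of the second type of $B^T$.
   Context: The Perron eigenvalue of a nonnegative irreducible matrix is its spectral radius, which is a simple eigenvalue with an eigenvector (the Perron eigenvector) having all entries positive. For a real $n\times n$ matrix $M=[m_{ij}]$ and an index $j$, let $y_1\ge\dots\ge y_n$ be the non-increasing rearrangement of $m_{1j},\dots,m_{j-1,j},0,m_{j+1,j},\dots,m_{nj}$. Define $\hat r_j=\sum_{t=1}^{(n-1)/2}y_t-\sum_{t=(n+3)/2}^{n}y_t$ if $n$ is odd and $\hat r_j=\sum_{t=1}^{n/2}y_t-\sum_{t=n/2+1}^{n}y_t$ if $n$ is even. The Gershgorin region of the second type of $M^T$ is $\bigcup_{j=1}^n\{z\in\mathbb{C}:|z-m_{jj}|\le\hat r_j\}$. *)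

(* Defs.v *)
From HB Require Import structures.
From mathcomp Require Import all_boot all_order all_algebra.
From mathcomp Require Import complex.
Set Implicit Arguments. Unset Strict Implicit. Unset Printing Implicit Defensive.
Import Order.TTheory GRing.Theory Num.Theory.
Local Open Scope ring_scope.
Local Open Scope complex_scope.

Definition nonneg_mx (R : numDomainType) n (A : 'M[R]_n) : Prop :=
  forall i j, 0 <= A i j.

(* Irreducible matrix: there is no nonempty proper subset I of the indices with
   A i j = 0 for all i in I, j not in I (i.e. A is not permutation-similar to a
   block upper triangular matrix with nontrivial diagonal blocks). *)
Definition irreducible_mx (R : numDomainType) n (A : 'M[R]_n) : Prop :=
  forall I : {set 'I_n}, I != set0 -> I != setT ->
    exists i, exists j, [/\ i \in I, j \notin I & A i j != 0].

Definition col_sorted (R : realDomainType) n (M : 'M[R]_n) (j : 'I_n) : seq R :=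
  sort (fun x y : R => y <= x)
       [seq (if i == j then 0 else M i j) | i <- enum 'I_n].

(* \hat r_j (1-based formulas of the paper translated to 0-based indices). *)
Definition rhat (R : realDomainType) n (M : 'M[R]_n) (j : 'I_n) : R :=
  let y := col_sorted M j in
  if odd n then
    \sum_(0 <= t < (n - 1) %/ 2) y`_t - \sum_((n + 3) %/ 2 - 1 <= t < n) y`_t
  else
    \sum_(0 <= t < n %/ 2) y`_t - \sum_(n %/ 2 <= t < n) y`_t.

Definition gersh2_region (R : rcfType) n (N : 'M[R]_n) : pred R[i] :=
  fun z => [exists j, `|z - (N^T j j)%:C| <= (rhat N^T j)%:C].

(* Main.v *)
From HB Require Import structures.
From mathcomp Require Import all_boot all_order all_algebra.
From mathcomp Require Import complex zify.
Require Import Defs.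
Import Order.TTheory GRing.Theory Num.Theory.
Local Open Scope ring_scope.
Local Open Scope complex_scope.

Lemma sum_abs_median (R : realDomainType) (s : seq R) (n : nat) :
 size s = n -> sorted (fun x y : R => y <= x) s ->
 \sum_(0 <= t < n) `|s`_t - s`_(n %/ 2)| =
 (if odd n then \sum_(0 <= t < (n - 1) %/ 2) s`_t - \sum_((n + 3) %/ 2 - 1 <= t < n) s`_t
  else \sum_(0 <= t < n %/ 2) s`_t - \sum_(n %/ 2 <= t < n) s`_t).
Proof.
move=> sz so.
have mono : forall i j, (i <= j < n)%N -> s`_j <= s`_i.
  move=> i j /andP[ij jn].
  have tr : transitive (fun x y : R => y <= x).
    by move=> a b c /= h1 h2; apply: le_trans h2 h1.
  have rf : reflexive (fun x y : R => y <= x) by move=> a /=.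
  apply: (sorted_leq_nth tr rf 0 so) => //.
  - by rewrite inE sz (leq_ltn_trans ij jn).
  - by rewrite inE sz.
set m := (n %/ 2)%N.
have hm : (m <= n)%N by rewrite leq_div.
have hmn : forall t, (t < n)%N -> (m < n)%N.
  by move=> t tn; rewrite /m ltn_Pdiv // (leq_ltn_trans _ tn).
have lo : forall t, (t <= m)%N -> (t < n)%N -> `|s`_t - s`_m| = s`_t - s`_m.
  by move=> t tm tn; rewrite ger0_norm // subr_ge0 mono // tm (hmn t).
have hi : forall t, (m <= t)%N -> (t < n)%N -> `|s`_t - s`_m| = s`_m - s`_t.
  by move=> t tm tn; rewrite ler0_norm ?opprB // subr_le0 mono // tm.
have E1 : \sum_(0 <= t < m) `|s`_t - s`_m| = \sum_(0 <= t < m) s`_t - (s`_m *+ m).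
  rewrite (eq_big_nat _ _ (F2 := fun t => s`_t - s`_m)); last first.
    by move=> t /andP[_ tm]; rewrite lo // ?(ltnW tm) // (leq_trans tm hm).
  by rewrite sumrB sumr_const_nat subn0.
have E2 : forall k, (m <= k)%N -> (k <= n)%N ->
   \sum_(k <= t < n) `|s`_t - s`_m| = (s`_m *+ (n - k)) - \sum_(k <= t < n) s`_t.
  move=> k mk kn.
  rewrite (eq_big_nat _ _ (F2 := fun t => s`_m - s`_t)); last first.
    by move=> t /andP[kt tn]; rewrite hi // (leq_trans mk kt).
  by rewrite sumrB sumr_const_nat.
have n2 : n = (odd n + m.*2)%N by rewrite /m divn2 -[LHS]odd_double_half addnC.
case: ifP => od.
- have nE : n = m.*2.+1 by rewrite {1}n2 od.
  have -> : ((n - 1) %/ 2 = m)%N by rewrite nE subn1 /= -muln2 mulnK.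
  have -> : ((n + 3) %/ 2 - 1 = m.+1)%N.
    rewrite nE; lia.
  have mn : (m < n)%N by rewrite nE; lia.
  rewrite (big_cat_nat _ (n:=m)) //=; try exact: ltnW mn.
  rewrite (big_cat_nat _ (m := m) (n := m.+1)) //=.
  rewrite big_nat1 subrr normr0 add0r E1 E2 //; try exact: mn.
  have -> : (n - m.+1 = m)%N by rewrite nE; lia.
  by rewrite addrA subrK.
- have nE : n = m.*2 by rewrite {1}n2 od.
  rewrite (big_cat_nat _ (n:=m)) //= E1 E2 //.
  have -> : (n - m = m)%N by rewrite nE -addnn addnK.
  by rewrite addrA subrK.
Qed.

Lemma normC_real (R : rcfType) (r : R) : `|r%:C| = (`|r|)%:C :> R[i].
Proof.
have [r0|r0] := lerP 0 r.
  by rewrite !ger0_norm // ler0c.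
rewrite !ltr0_norm ?rmorphN // ltcR //.
Qed.

Lemma normC_Re (R : rcfType) (z : R[i]) : `|z| = (complex.Re `|z|)%:C.
Proof. by rewrite RRe_real // normr_real. Qed.

Theorem corollary1 (R : rcfType) (n : nat) (A : 'M[R]_n)
  (lambda_p : R) (v_p : 'cV[R]_n) :
  nonneg_mx A -> irreducible_mx A ->
  (* lambda_p is the spectral radius of A and an eigenvalue of A *)
  eigenvalue (map_mx (real_complex R) A) lambda_p%:C ->
  (forall mu : R[i], eigenvalue (map_mx (real_complex R) A) mu ->
     `|mu| <= lambda_p%:C) ->
  (* v_p is a Perron eigenvector: positive entries, A v_p = lambda_p v_p *)
  (forall i, 0 < v_p i 0) ->
  A *m v_p = lambda_p *: v_p ->
  let S := diag_mx v_p^T in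
  let B := invmx S *m A *m S in
  forall mu : R[i], eigenvalue (map_mx (real_complex R) A) mu ->
    mu != lambda_p%:C -> gersh2_region B^T mu.
Proof.
move=> _ _ _ _ vpos Av S B mu eigmu mune.
set rc := real_complex R.
have Su : S \in unitmx.
  rewrite unitmxE det_diag unitfE; apply: lt0r_neq0; apply: prodr_gt0 => i _.
  by rewrite mxE; exact: vpos.
have S1 : S *m const_mx 1 = v_p.
  apply/matrixP => i j; rewrite mul_diag_mx !mxE mulr1 (ord1 j) //.
have B1 : B *m (const_mx 1 : 'cV[R]_n) = lambda_p *: const_mx 1.
  rewrite /B -!mulmxA S1 Av -scalemxAr -S1 mulmxA mulVmx // mul1mx //.
have rowsum : forall i, \sum_j B i j = lambda_p.
  move=> i; have := congr1 (fun M : 'cV[R]_n => M i 0) B1; rewrite !mxE mulr1 => <-.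
  by apply: eq_bigr => j _; rewrite !mxE mulr1.
have SSi : map_mx rc S *m map_mx rc (invmx S) = 1%:M.
  by rewrite -map_mxM mulmxV // map_mx1.
case/eigenvalueP: eigmu => u uA unz.
set x := u *m map_mx rc S.
have xB : x *m map_mx rc B = mu *: x.
  rewrite /x /B !map_mxM !mulmxA -(mulmxA u) SSi mulmx1 uA -scalemxAl //.
have xnz : x != 0.
  apply: contraNneq unz => x0.
  by rewrite -[u]mulmx1 -SSi mulmxA -/x x0 mul0mx.
clearbody x B.
have xBk : forall k, \sum_i x 0 i * (B i k)%:C = mu * x 0 k.
  move=> k; have := congr1 (fun M : 'rV[R[i]]_n => M 0 k) xB; rewrite !mxE => <-.
  by apply: eq_bigr => j _; rewrite mxE.
have sx : \sum_i x 0 i = 0.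
  have e1 : mu * \sum_i x 0 i = lambda_p%:C * \sum_i x 0 i.
    rewrite mulr_sumr.
    under eq_bigr => k _ do rewrite -xBk.
    rewrite exchange_big /= mulr_sumr; apply: eq_bigr => i _.
    by rewrite -mulr_sumr -rmorph_sum /= rowsum mulrC.
  have : (mu - lambda_p%:C) * \sum_i x 0 i = 0 by rewrite mulrBl e1 subrr.
  by move/eqP; rewrite mulf_eq0 subr_eq0 (negbTE mune) /= => /eqP.
have [i0 xi0] : exists i0, x 0 i0 != 0.
  case: (pickP (fun i => x 0 i != 0)) => [i0 h|h]; first by exists i0.
  case/eqP: xnz; apply/matrixP => a b; rewrite (ord1 a) mxE.
  by move: (h b) => /negbFE/eqP.
pose key := fun j => complex.Re `|x 0 j|.
case: (@arg_maxP _ _ _ i0 predT key isT) => k _ kmax.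
have nx : forall j, `|x 0 j| <= `|x 0 k|.
  by move=> j; rewrite (@normC_Re _ (x 0 j)) (@normC_Re _ (x 0 k)) lecR; apply: kmax.
have xkpos : 0 < `|x 0 k|.
  by apply: lt_le_trans (nx i0); rewrite normr_gt0.
pose s := col_sorted B k.
pose c := s`_(n %/ 2)%N.
pose y := fun i => if i == k then 0 else B i k.
have C1 : (mu - (B k k)%:C) * x 0 k = \sum_i x 0 i * (y i - c)%:C.
  under eq_bigr => i _ do rewrite rmorphB mulrBr.
  rewrite sumrB -mulr_suml sx mul0r subr0.
  rewrite mulrBl -xBk (bigD1 k) //= [in RHS](bigD1 k) //= /y eqxx rmorph0 mulr0 add0r.
  rewrite mulrC addrAC subrr add0r; apply: eq_bigr => i /negbTE -> //.
have C3 : \sum_i `|y i - c| = rhat B k.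
  rewrite /rhat /= -/s -(@sum_abs_median _ s n).
  - have sz : size s = n by rewrite size_sort size_map size_enum_ord.
    transitivity (\sum_(0 <= t < size s) `|s`_t - c|); last by rewrite sz.
    rewrite -(big_nth 0 predT (fun v => `|v - c|)) /=.
    rewrite /s /col_sorted (perm_big _ (permEl (perm_sort _ _))) big_map big_enum /=.
    by apply: eq_bigl => i; rewrite inE.
  - by rewrite size_sort size_map size_enum_ord.
  - by apply: sort_sorted => a b; exact: le_total.
have key1 : `|mu - (B k k)%:C| * `|x 0 k| <= (rhat B k)%:C * `|x 0 k|.
  rewrite -normrM C1; apply: le_trans (ler_norm_sum _ _ _) _.
  rewrite -C3 rmorph_sum mulr_suml; apply: ler_sum => i _.
  rewrite normrM normC_real mulrC; apply: ler_wpM2l (nx i).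
  by rewrite ler0c normr_ge0.
rewrite ler_pM2r // in key1.
by rewrite /gersh2_region; apply/existsP; exists k; rewrite trmxK.
Qed.
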